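(* Assume $f:[a,b]\to\mathbb{R}$ has an analytic extension. Then there exist constants $C,\gamma>0$, depending only on $f$, such that for every $L\in\mathbb{N}$ there exists a ReLU neural network $\Phi_L:\mathbb{R}\to\mathbb{R}$ with \[ \sup_{x\in[a,b]}|f(x)-\Phi_L(x)|\le C\exp(-\gamma L^{1/2}),\qquad \mathrm{depth}(\Phi_L)\le CL,\qquad \mathrm{width}(\Phi_L)\le C. \]
   Context: A function $F:(\alpha,\beta)\to\mathbb{R}$ is analytic if for every $x_0\in(\alpha,\beta)$ there are $r>0$ and $(a_k)_{k\ge0}$ with $\sum_k|a_k|r^k<\infty$ and $F(x)=\sum_ka_k(x-x_0)^k$ for $|x-x_0|<r$. A function $f:[a,b]\to\mathbb{R}$ has an analytic extension if there is an analytic $F:(\alpha,\beta)\to\mathbb{R}$ with $[a,b]\subset(\alpha,\beta)$ and $F=f$ on $[a,b]$. For a neural network, depth is the number of hidden layers and width the maximal number of neurons in a hidden layer; ReLU is $\sigma(x)=\max(x,0)$. *)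

(* Defs.v *)
From Stdlib Require Import Reals List.
From Coquelicot Require Import Coquelicot.
Open Scope R_scope.

Definition analytic_on (alpha beta : R) (F : R -> R) : Prop :=
  forall x0, alpha < x0 < beta ->
    exists (r : R) (a : nat -> R),
      0 < r /\
      ex_series (fun k => Rabs (a k) * r ^ k) /\
      (forall x, alpha < x < beta -> Rabs (x - x0) < r ->
         is_series (fun k => a k * (x - x0) ^ k) (F x)).

Definition has_analytic_extension (a b : R) (f : R -> R) : Prop :=
  exists (alpha beta : R) (F : R -> R),
    alpha < a /\ b < beta /\ analytic_on alpha beta F /\
    (forall x, a <= x <= b -> F x = f x).

Definition relu (x : R) : R := Rmax x 0.

Fixpoint fsum (m : nat) (f : nat -> R) : R :=
  match m with
  | O => 0
  | S m' => fsum m' f + f m'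
  end.

Record layer := Layer { lout : nat; lW : nat -> nat -> R; lb : nat -> R }.

(** Vectors are represented as nat -> R; only the
    first d coordinates (d = current width) are used. *)
Record network := Network { hidden : list layer; outW : nat -> R; outb : R }.

Fixpoint eval_hidden (ls : list layer) (din : nat) (v : nat -> R)
  : nat * (nat -> R) :=
  match ls with
  | nil => (din, v)
  | l :: ls' =>
      eval_hidden ls' (lout l)
        (fun i => relu (fsum din (fun j => lW l i j * v j) + lb l i))
  end.

Definition realize (N : network) (x : R) : R :=
  let '(d, v) := eval_hidden (hidden N) 1%nat (fun _ => x) in
  fsum d (fun j => outW N j * v j) + outb N.

Definition depth (N : network) : nat := length (hidden N).
Definition width (N : network) : nat :=
  fold_right (fun l m => Nat.max (lout l) m) 0%nat (hidden N).

(* Main.v *)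
Require Import Defs.
From Stdlib Require Import Reals.
From Coquelicot Require Import Coquelicot.
From Stdlib Require Import Lra Lia Psatz List Classical IndefiniteDescription.
Open Scope R_scope.


Arguments relu : simpl never.

Lemma relu_id z : 0 <= z -> relu z = z.
Proof. intros; unfold relu, Rmax; destruct (Rle_dec z 0); lra. Qed.
Lemma relu_0 z : z <= 0 -> relu z = 0.
Proof. intros; unfold relu, Rmax; destruct (Rle_dec z 0); lra. Qed.
Lemma relu_ge0 z : 0 <= relu z.
Proof. unfold relu, Rmax; destruct (Rle_dec z 0); lra. Qed.

Lemma fsum_add n f g : fsum n (fun j => f j + g j) = fsum n f + fsum n g.
Proof. induction n; simpl; [lra|rewrite IHn; lra]. Qed.
Lemma fsum_scal n c f : fsum n (fun j => c * f j) = c * fsum n f.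
Proof. induction n; simpl; [lra|rewrite IHn; lra]. Qed.
Lemma fsum_zero n : fsum n (fun _ => 0) = 0.
Proof. induction n; simpl; [lra|rewrite IHn; lra]. Qed.
Lemma fsum_ext n f g : (forall j, (j < n)%nat -> f j = g j) -> fsum n f = fsum n g.
Proof. induction n; intros H; simpl; auto. rewrite IHn by (intros; apply H; lia). rewrite H by lia; auto. Qed.
Lemma fsum_unit n i v : (i < n)%nat ->
  fsum n (fun j => (if Nat.eqb j i then 1 else 0) * v j) = v i.
Proof.
  induction n; intros H; simpl. lia.
  destruct (Nat.eq_dec i n) as [->|Hne].
  - rewrite Nat.eqb_refl. rewrite (fsum_ext _ _ (fun _ => 0)).
    rewrite fsum_zero; lra. intros j Hj. destruct (Nat.eqb_spec j n); [lia|lra].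
  - rewrite IHn by lia. destruct (Nat.eqb_spec n i); [lia|lra].
Qed.

Definition form := ((nat -> R) * R)%type.
Definition fv (j:nat) : form := (fun k => if Nat.eqb k j then 1 else 0, 0).
Definition fc (c:R) : form := (fun _ => 0, c).
Definition fadd (e1 e2:form) : form := (fun k => fst e1 k + fst e2 k, snd e1 + snd e2).
Definition fsc (c:R) (e:form) : form := (fun k => c * fst e k, c * snd e).
Definition fev (d:nat) (e:form) (v:nat->R) := fsum d (fun j => fst e j * v j) + snd e.
Arguments fev : simpl never.

Lemma fev_fv d j v : (j < d)%nat -> fev d (fv j) v = v j.
Proof. intros; unfold fev, fv; simpl. rewrite fsum_unit; auto; lra. Qed.
Lemma fev_fc d c v : fev d (fc c) v = c.
Proof. unfold fev, fc; simpl. rewrite (fsum_ext _ _ (fun _ => 0)), fsum_zero; [lra|intros; lra]. Qed.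
Lemma fev_fadd d e1 e2 v : fev d (fadd e1 e2) v = fev d e1 v + fev d e2 v.
Proof. unfold fev, fadd; simpl.
  rewrite (fsum_ext _ _ (fun j => fst e1 j * v j + fst e2 j * v j)), fsum_add; [lra|intros; lra]. Qed.
Lemma fev_fsc d c e v : fev d (fsc c e) v = c * fev d e v.
Proof. unfold fev, fsc; simpl.
  rewrite (fsum_ext _ _ (fun j => c * (fst e j * v j))), fsum_scal; [lra|intros; lra]. Qed.

Definition W := 10%nat.
Ltac fsimp := repeat (rewrite ?fev_fadd, ?fev_fsc, ?fev_fc; try (rewrite fev_fv by (unfold W in *; lia))).

Definition mkL (S : nat -> form) : layer := Layer W (fun i j => fst (S i) j) (fun i => snd (S i)).

Lemma eval_app l1 l2 d v : eval_hidden (l1 ++ l2) d v =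
  eval_hidden l2 (fst (eval_hidden l1 d v)) (snd (eval_hidden l1 d v)).
Proof. revert d v; induction l1; intros; simpl; auto. Qed.

Definition Hoare (ls : list layer) (Pre Post : (nat -> R) -> Prop) :=
  forall v, Pre v -> Post (snd (eval_hidden ls W v)) /\ fst (eval_hidden ls W v) = W.

Lemma Hoare_nil P : Hoare nil P P.
Proof. intros v H; simpl; auto. Qed.
Lemma Hoare_app l1 l2 P Q R : Hoare l1 P Q -> Hoare l2 Q R -> Hoare (l1 ++ l2) P R.
Proof. intros H1 H2 v Hv. rewrite eval_app. destruct (H1 v Hv) as [HQ Hd].
  rewrite Hd. apply H2; auto. Qed.
Lemma Hoare_cons S ls P Q R :
  (forall v, P v -> Q (fun i => relu (fev W (S i) v))) -> Hoare ls Q R -> Hoare (mkL S :: ls) P R.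
Proof. intros H1 H2 v Hv. apply (H2 _ (H1 v Hv)). Qed.
Lemma Hoare_weak ls P Q Q' : Hoare ls P Q -> (forall v, Q v -> Q' v) -> Hoare ls P Q'.
Proof. intros H Hi v Hv; destruct (H v Hv); auto. Qed.
Lemma Rabs_le_between a b : Rabs a <= b -> - b <= a <= b.
Proof. unfold Rabs; destruct (Rcase_abs a); intros; lra. Qed.


Definition phi (G : R) := G * (1 - G).
Definition gf (G : R) := 2 * G - 4 * relu (G - 1/2).

Lemma saw_alg G : 0 <= G <= 1 -> (0 <= gf G <= 1) /\ phi G = gf G / 4 + phi (gf G) / 4.
Proof.
  intros HG; unfold gf, phi. destruct (Rle_dec G (1/2)).
  - rewrite relu_0 by lra. split; [lra|]. field.
  - rewrite relu_id by lra. split; [lra|]. field.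
Qed.
Lemma phi_bnd G : 0 <= G <= 1 -> 0 <= phi G <= 1/4.
Proof. intros; unfold phi; pose proof (pow2_ge_0 (G - 1/2)); split; nra. Qed.
Lemma pow4_pos s : 0 < 4 ^ s.
Proof. apply pow_lt; lra. Qed.

Section Gadgets.
Variables (A x a c c' t r : R).

Definition sform : form := fadd (fsc (/r) (fadd (fv 2) (fsc (-1) (fv 3)))) (fc ((c - t)/r)).
Definition rform (b : R) : form :=
  fadd (fc b) (fadd (fsc (A^2) (fadd (fv 6) (fsc (-1) (fv 9)))) (fsc (-A) sform)).
Definition w1form b : form := fadd (fsc (/(2*A)) (fadd sform (rform b))) (fc (1/2)).
Definition w2form b : form := fadd (fsc (/(2*A)) (fadd (rform b) (fsc (-1) sform))) (fc (1/2)).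
Definition gform (i : nat) : form := fadd (fsc 2 (fv i)) (fsc (-4) (fv (S i))).

Definition PQL := mkL (fun i => match i with 0 => fv 0 | 1 => fv 1
   | 2 => fadd (fv 0) (fc (a - c)) | 3 => fadd (fv 0) (fc (a - c')) | _ => fc 0 end).
Definition InitL b := mkL (fun i => match i with 0 => fv 0 | 1 => fv 1 | 2 => fv 2 | 3 => fv 3
   | 4 => w1form b | 5 => fadd (w1form b) (fc (-1/2)) | 6 => w1form b
   | 7 => w2form b | 8 => fadd (w2form b) (fc (-1/2)) | 9 => w2form b | _ => fc 0 end).
Definition SawL (s : nat) := mkL (fun i => match i with 0 => fv 0 | 1 => fv 1 | 2 => fv 2 | 3 => fv 3
   | 4 => gform 4 | 5 => fadd (gform 4) (fc (-1/2)) | 6 => fadd (fv 6) (fsc (- / 4 ^ (S s)) (gform 4))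
   | 7 => gform 7 | 8 => fadd (gform 7) (fc (-1/2)) | 9 => fadd (fv 9) (fsc (- / 4 ^ (S s)) (gform 7))
   | _ => fc 0 end).
Definition AccL b := mkL (fun i => match i with 0 => fv 0 | 1 => fadd (fv 1) (fadd (rform b) (fc A))
   | _ => fc 0 end).

Fixpoint sawl (s m : nat) : list layer :=
  match m with O => nil | S m' => SawL s :: sawl (S s) m' end.

Definition Base (acc : R) (v : nat -> R) := v 0%nat = x - a /\ v 1%nat = acc.
Definition PQok (v : nat -> R) := v 2%nat = relu (x - c) /\ v 3%nat = relu (x - c').
Definition sx := (c + relu (x - c) - relu (x - c') - t) / r.
Definition SqI (s : nat) (w : R) (v : nat -> R) (i : nat) :=
  exists G, 0 <= G <= 1 /\ v i = G /\ v (S i) = relu (G - 1/2) /\ v (S (S i)) = w^2 + phi G / 4 ^ s.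

Hypothesis Hr : r <> 0.
Hypothesis HA : 0 < A.
Hypothesis Hxa : a <= x.

Lemma sform_ev v : PQok v -> fev W sform v = sx.
Proof. intros [H2 H3]. unfold sform, sx; fsimp. rewrite H2, H3. field. auto. Qed.

Lemma rform_ev b v : PQok v -> fev W (rform b) v = b + A^2 * (v 6%nat - v 9%nat) - A * sx.
Proof. intros H. unfold rform; fsimp. rewrite sform_ev by auto. ring. Qed.

Lemma saw_step s w1 w2 acc :
  0 <= acc ->
  Hoare (sawl s 0) (fun v => Base acc v /\ PQok v /\ SqI s w1 v 4 /\ SqI s w2 v 7)
                   (fun v => Base acc v /\ PQok v /\ SqI s w1 v 4 /\ SqI s w2 v 7).
Proof. intros; apply Hoare_nil. Qed.

Lemma sqI_next s w v i :
  (i + 2 < W)%nat -> SqI s w v i ->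
  SqI (S s) w (fun k => relu (fev W (if Nat.eqb k i then gform i else
        if Nat.eqb k (S i) then fadd (gform i) (fc (-1/2)) else
        fadd (fv (S (S i))) (fsc (- / 4 ^ (S s)) (gform i))) v)) i.
Proof.
  intros Hi [G [HG [H0 [H1 H2]]]].
  destruct (saw_alg G HG) as [Hg Hphi].
  assert (Hge : fev W (gform i) v = gf G).
  { unfold gform; fsimp. rewrite H0, H1. unfold gf; ring. }
  exists (gf G). split; auto.
  rewrite Nat.eqb_refl. rewrite Hge, relu_id by lra. split; auto.
  assert (Hn1 : Nat.eqb (S i) i = false) by (apply Nat.eqb_neq; lia).
  assert (Hn2 : Nat.eqb (S (S i)) i = false) by (apply Nat.eqb_neq; lia).
  assert (Hn3 : Nat.eqb (S (S i)) (S i) = false) by (apply Nat.eqb_neq; lia).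
  rewrite Hn1, Nat.eqb_refl, Hn2, Hn3. split.
  - rewrite fev_fadd, Hge, fev_fc. f_equal; lra.
  - rewrite fev_fadd, fev_fsc, Hge, fev_fv by (unfold W in *; lia). rewrite H2. pose proof (pow4_pos s). pose proof (phi_bnd (gf G) Hg).
    replace (4 ^ S s) with (4 * 4^s) by (simpl; ring). rewrite Hphi.
    pose proof (pow2_ge_0 w).
    replace (w ^ 2 + (gf G / 4 + phi (gf G) / 4) / 4 ^ s + - / (4 * 4 ^ s) * gf G)
        with (w^2 + phi (gf G) / (4 * 4 ^ s)) by (field; apply Rgt_not_eq; lra).
    rewrite relu_id; auto.
    apply Rplus_le_le_0_compat; [lra|]. unfold Rdiv; apply Rmult_le_pos; [lra|]; left; apply Rinv_0_lt_compat; lra.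
Qed.


Lemma SqI_ext s w v v' i : v' i = v i -> v' (S i) = v (S i) -> v' (S (S i)) = v (S (S i)) ->
  SqI s w v i -> SqI s w v' i.
Proof. intros E0 E1 E2 [G HG]. exists G. rewrite E0, E1, E2; auto. Qed.

Lemma relu_relu z : relu (relu z) = relu z.
Proof. apply relu_id, relu_ge0. Qed.

Lemma saw_hoare m : forall s w1 w2 acc, 0 <= acc ->
  Hoare (sawl s m) (fun v => Base acc v /\ PQok v /\ SqI s w1 v 4 /\ SqI s w2 v 7)
                   (fun v => Base acc v /\ PQok v /\ SqI (s + m) w1 v 4 /\ SqI (s + m) w2 v 7).
Proof.
  induction m; intros s w1 w2 acc Hacc.
  - rewrite Nat.add_0_r. apply Hoare_nil.
  - simpl sawl. apply Hoare_cons with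
      (Q := fun v => Base acc v /\ PQok v /\ SqI (S s) w1 v 4 /\ SqI (S s) w2 v 7).
    + intros v [[B0 B1] [[P2 P3] [S1 S2]]].
      split; [|split; [|split]]; cbn beta iota.
      * split; fsimp; [rewrite B0; apply relu_id; lra| rewrite B1; apply relu_id; lra].
      * split; fsimp; [rewrite P2|rewrite P3]; apply relu_relu.
      * apply (SqI_ext _ _ _ _ _ eq_refl eq_refl eq_refl (sqI_next s w1 v 4 ltac:(unfold W; lia) S1)).
      * apply (SqI_ext _ _ _ _ _ eq_refl eq_refl eq_refl (sqI_next s w2 v 7 ltac:(unfold W; lia) S2)).
    + replace (s + S m)%nat with (S s + m)%nat by lia. apply IHm; auto.
Qed.

Definition rho b v := b + A^2 * (v 6%nat - v 9%nat) - A * sx.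


Lemma w1_ev b v : PQok v -> fev W (w1form b) v = (sx + rho b v)/(2*A) + 1/2.
Proof. intros H. unfold w1form. rewrite fev_fadd, fev_fsc, fev_fadd, sform_ev, rform_ev, fev_fc by auto.
  unfold rho. field. lra. Qed.
Lemma w2_ev b v : PQok v -> fev W (w2form b) v = (rho b v - sx)/(2*A) + 1/2.
Proof. intros H. unfold w2form. rewrite fev_fadd, fev_fsc, fev_fadd, fev_fsc, sform_ev, rform_ev, fev_fc by auto.
  unfold rho. field. lra. Qed.

Lemma sq_init w v' i : 0 <= w <= 1 -> v' i = relu w -> v' (S i) = relu (w - 1/2) ->
   v' (S (S i)) = relu w -> SqI 0 w v' i.
Proof. intros Hw E0 E1 E2. exists w. rewrite relu_id in E0, E2 by lra.
  repeat split; auto; try lra. rewrite E2. unfold phi. simpl. field. Qed.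

Lemma block_hoare b b' m acc y Y dl : 0 <= acc -> Rabs sx <= 1/2 -> Rabs y <= Y ->
  Y + 2 * dl + 1/2 <= A -> A^2 / 4^(S m) <= dl ->
  Hoare (InitL b :: sawl 0 m) (fun v => Base acc v /\ PQok v /\ Rabs (rho b v - y) <= 2 * dl)
     (fun v => Base acc v /\ PQok v /\ Rabs (rho b' v - (b' + sx * y)) <= 2 * dl).
Proof.
  intros Hacc Hsx Hy HY Hdl v0 Hv0.
  set (yt := rho b v0).
  assert (Hyt : Rabs (yt - y) <= 2 * dl) by (unfold yt; tauto).
  set (w1 := (sx + yt)/(2*A) + 1/2). set (w2 := (yt - sx)/(2*A) + 1/2).
  assert (Hw1 : 0 <= w1 <= 1).
  { unfold w1. assert (Rabs (sx + yt) <= A).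
    { eapply Rle_trans; [apply Rabs_triang|]. replace yt with (y + (yt - y)) by ring.
      pose proof (Rabs_triang y (yt - y)). lra. }
    apply Rabs_le_between in H. split.
    - apply Rle_trans with ((-A)/(2*A) + 1/2). right; field; lra.
      apply Rplus_le_compat_r. unfold Rdiv. apply Rmult_le_compat_r; [left; apply Rinv_0_lt_compat; lra|lra].
    - apply Rle_trans with (A/(2*A) + 1/2). apply Rplus_le_compat_r. unfold Rdiv. apply Rmult_le_compat_r; [left; apply Rinv_0_lt_compat; lra|lra].
      right; field; lra. }
  assert (Hw2 : 0 <= w2 <= 1).
  { unfold w2. assert (Rabs (yt - sx) <= A).
    { eapply Rle_trans; [apply Rabs_triang|]. rewrite Rabs_Ropp. replace yt with (y + (yt - y)) by ring.
      pose proof (Rabs_triang y (yt - y)). lra. }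
    apply Rabs_le_between in H. split.
    - apply Rle_trans with ((-A)/(2*A) + 1/2). right; field; lra.
      apply Rplus_le_compat_r. unfold Rdiv. apply Rmult_le_compat_r; [left; apply Rinv_0_lt_compat; lra|lra].
    - apply Rle_trans with (A/(2*A) + 1/2). apply Rplus_le_compat_r. unfold Rdiv. apply Rmult_le_compat_r; [left; apply Rinv_0_lt_compat; lra|lra].
      right; field; lra. }
  assert (H : Hoare (InitL b :: sawl 0 m)
     (fun v => Base acc v /\ PQok v /\ rho b v = yt)
     (fun v => Base acc v /\ PQok v /\ SqI m w1 v 4 /\ SqI m w2 v 7)).
  { apply Hoare_cons with (Q := fun v => Base acc v /\ PQok v /\ SqI 0 w1 v 4 /\ SqI 0 w2 v 7).
    - intros v [[B0 B1] [[P2 P3] Er]].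
      split; [|split; [|split]]; cbn beta iota.
      * split; fsimp; [rewrite B0; apply relu_id; lra| rewrite B1; apply relu_id; lra].
      * split; fsimp; [rewrite P2|rewrite P3]; apply relu_relu.
      * apply sq_init; auto; cbn beta iota.
        -- rewrite w1_ev by (split; auto). rewrite Er; auto.
        -- rewrite fev_fadd, w1_ev, fev_fc by (split; auto). rewrite Er. f_equal; unfold w1; lra.
        -- rewrite w1_ev by (split; auto). rewrite Er; auto.
      * apply sq_init; auto; cbn beta iota.
        -- rewrite w2_ev by (split; auto). rewrite Er; auto.
        -- rewrite fev_fadd, w2_ev, fev_fc by (split; auto). rewrite Er. f_equal; unfold w2; lra.
        -- rewrite w2_ev by (split; auto). rewrite Er; auto.
    - apply (saw_hoare m 0 w1 w2 acc Hacc). }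
  destruct (H v0 ltac:(unfold yt; tauto)) as [[HB [HP [[G1 [HG1 [_ [_ E1]]]] [G2 [HG2 [_ [_ E2]]]]]]] Hd].
  split; auto. split; auto. split; auto.
  set (v := snd (eval_hidden (InitL b :: sawl 0 m) W v0)) in *.
  unfold rho. rewrite E1, E2.
  assert (Halg : A^2 * (w1^2 - w2^2) - A * sx = sx * yt) by (unfold w1, w2; field; lra).
  pose proof (pow4_pos m). pose proof (phi_bnd _ HG1). pose proof (phi_bnd _ HG2).
  set (K := A^2 / 4^m).
  assert (HK : 0 <= K) by (unfold K, Rdiv; apply Rmult_le_pos; [nra|left; apply Rinv_0_lt_compat; lra]).
  assert (HK4 : K / 4 <= dl) by (unfold K; replace (4 ^ S m) with (4 * 4^m) in Hdl by (simpl; ring);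
     apply Rle_trans with (2 := Hdl); right; field; lra).
  replace (b' + A ^ 2 * (w1 ^ 2 + phi G1 / 4 ^ m - (w2 ^ 2 + phi G2 / 4 ^ m)) - A * sx - (b' + sx * y))
    with (sx * (yt - y) + K * (phi G1 - phi G2)).
  2:{ unfold K. replace (sx*(yt-y)) with (A^2*(w1^2-w2^2) - A*sx - sx*y) by (rewrite Halg; ring). field. lra. }
  eapply Rle_trans; [apply Rabs_triang|]. rewrite !Rabs_mult, (Rabs_pos_eq K) by auto.
  assert (Rabs (phi G1 - phi G2) <= 1/4) by (apply Rabs_le; lra).
  assert (Rabs sx * Rabs (yt - y) <= 1/2 * (2 * dl)) by (apply Rmult_le_compat; auto; apply Rabs_pos).
  assert (K * Rabs (phi G1 - phi G2) <= K * (1/4)) by (apply Rmult_le_compat_l; auto).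
  lra.
Qed.

Fixpoint run (be : nat -> R) (s : R) (k : nat) (y : R) : R :=
  match k with O => y | S k' => run be s k' (be k' + s * y) end.

Lemma run_eq be s k : forall y, run be s k y = fsum k (fun j => be j * s ^ j) + s ^ k * y.
Proof. induction k; intros y; simpl. ring. rewrite IHk. ring. Qed.

Lemma run_bnd be s M k : (forall j, Rabs (be j) <= M) -> Rabs s <= 1/2 ->
  forall y, Rabs y <= 2 * M + A/2 -> Rabs (run be s k y) <= 2 * M + A / 2.
Proof.
  intros Hb Hs. induction k; intros y Hy; simpl; auto. apply IHk.
  eapply Rle_trans; [apply Rabs_triang|]. rewrite Rabs_mult.
  assert (Rabs s * Rabs y <= 1/2 * (2*M + A/2)) by (apply Rmult_le_compat; auto; apply Rabs_pos).
  specialize (Hb k). lra.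
Qed.

Fixpoint hsteps (be : nat -> R) (m k : nat) : list layer :=
  match k with O => nil | S k' => InitL (be (S k')) :: sawl 0 m ++ hsteps be m k' end.

Lemma hsteps_hoare be M m dl acc : (forall j, Rabs (be j) <= M) -> Rabs sx <= 1/2 ->
  2 * M + A/2 + 2 * dl + 1/2 <= A -> A^2 / 4^(S m) <= dl -> 0 <= acc ->
  forall k y, Rabs y <= 2 * M + A/2 ->
  Hoare (hsteps be m k) (fun v => Base acc v /\ PQok v /\ Rabs (rho (be k) v - y) <= 2 * dl)
     (fun v => Base acc v /\ PQok v /\ Rabs (rho (be 0%nat) v - run be sx k y) <= 2 * dl).
Proof.
  intros Hb Hs HA2 Hdl Hacc. induction k; intros y Hy.
  - apply Hoare_nil.
  - simpl hsteps. change (InitL (be (S k)) :: sawl 0 m ++ hsteps be m k) with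
      ((InitL (be (S k)) :: sawl 0 m) ++ hsteps be m k).
    eapply Hoare_app.
    + apply (block_hoare (be (S k)) (be k) m acc y (2 * M + A/2) dl); auto; lra.
    + simpl run. apply IHk.
      eapply Rle_trans; [apply Rabs_triang|]. rewrite Rabs_mult.
      assert (Rabs sx * Rabs y <= 1/2 * (2*M + A/2)) by (apply Rmult_le_compat; auto; apply Rabs_pos).
      specialize (Hb k). lra.
Qed.

Definition piece (be : nat -> R) (m n : nat) : list layer :=
  PQL :: hsteps be m n ++ AccL (be 0%nat) :: nil.

Lemma piece_hoare be M m n dl acc : (forall j, Rabs (be j) <= M) -> Rabs sx <= 1/2 ->
  2 * M + A/2 + 2 * dl + 1/2 <= A -> A^2 / 4^(S m) <= dl -> 0 <= acc -> 0 <= dl -> c <= c' ->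
  Hoare (piece be m n) (Base acc)
    (fun v => v 0%nat = x - a /\ 0 <= v 1%nat /\
       Rabs (v 1%nat - acc - A - run be sx n (be n - A * sx)) <= 2 * dl).
Proof.
  intros Hb Hs HA2 Hdl Hacc Hdl0 Hcc.
  assert (HM : 0 <= M) by (pose proof (Hb 0%nat); pose proof (Rabs_pos (be 0%nat)); lra).
  unfold piece. apply Hoare_cons with
    (Q := fun v => Base acc v /\ PQok v /\ Rabs (rho (be n) v - (be n - A * sx)) <= 2 * dl).
  { intros v [B0 B1]. split; [|split]; cbn beta iota.
    - split; fsimp; [rewrite B0; apply relu_id; lra| rewrite B1; apply relu_id; lra].
    - split; fsimp; rewrite B0; f_equal; ring.
    - unfold rho; cbn beta iota. rewrite !fev_fc. rewrite relu_0 by lra.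
      replace (be n + A ^ 2 * (0 - 0) - A * sx - (be n - A * sx)) with 0 by ring.
      rewrite Rabs_R0; lra. }
  eapply Hoare_app.
  { apply (hsteps_hoare be M m dl acc); auto.
    rewrite Rabs_minus_sym. unfold Rminus. eapply Rle_trans; [apply Rabs_triang|].
    rewrite Rabs_Ropp, Rabs_mult, (Rabs_pos_eq A) by lra.
    assert (A * Rabs sx <= A * (1/2)) by (apply Rmult_le_compat_l; lra).
    specialize (Hb n). lra. }
  apply Hoare_cons with (Q := fun v => v 0%nat = x - a /\ 0 <= v 1%nat /\
       Rabs (v 1%nat - acc - A - run be sx n (be n - A * sx)) <= 2 * dl).
  2: apply Hoare_nil.
  intros v [[B0 B1] [HP Er]]. cbn beta iota.
  set (R0 := run be sx n (be n - A * sx)).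
  assert (HR : Rabs R0 <= 2 * M + A/2).
  { apply run_bnd with (M := M); auto.
    rewrite Rabs_minus_sym. unfold Rminus. eapply Rle_trans; [apply Rabs_triang|].
    rewrite Rabs_Ropp, Rabs_mult, (Rabs_pos_eq A) by lra.
    assert (A * Rabs sx <= A * (1/2)) by (apply Rmult_le_compat_l; lra).
    specialize (Hb n). lra. }
  rewrite fev_fadd, fev_fadd, rform_ev, fev_fc by auto. fold (rho (be 0%nat) v).
  fsimp. rewrite B0, B1.
  apply Rabs_le_between in HR. apply Rabs_le_between in Er. unfold R0 in *.
  rewrite relu_id by lra. rewrite relu_id by lra.
  split; auto. split; [lra|]. apply Rabs_le. lra.
Qed.

End Gadgets.


Definition lw (ls : list layer) := Forall (fun l => lout l = W) ls.

Lemma lw_app l1 l2 : lw l1 -> lw l2 -> lw (l1 ++ l2).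
Proof. intros; apply Forall_app; auto. Qed.
Lemma lw_sawl s m : lw (sawl s m).
Proof. revert s; induction m; intros; simpl; [constructor|]. constructor; [reflexivity|apply IHm]. Qed.
Lemma lw_hsteps A c t r be m k : lw (hsteps A c t r be m k).
Proof. induction k; simpl; [constructor|]. constructor; [reflexivity|]. apply lw_app; auto. apply lw_sawl. Qed.
Lemma lw_piece A a c c' t r be m n : lw (piece A a c c' t r be m n).
Proof. unfold piece; constructor; try reflexivity; auto. apply lw_app. apply lw_hsteps. constructor; try reflexivity; auto. Qed.

Lemma len_sawl s m : length (sawl s m) = m.
Proof. revert s; induction m; intros; simpl; auto. Qed.
Lemma len_hsteps A c t r be m k : length (hsteps A c t r be m k) = (k * S m)%nat.
Proof. induction k; simpl; auto. rewrite length_app, len_sawl, IHk. lia. Qed.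
Lemma len_piece A a c c' t r be m n : length (piece A a c c' t r be m n) = (2 + n * S m)%nat.
Proof. unfold piece. simpl. rewrite length_app, len_hsteps. simpl. lia. Qed.

Section Net.
Variables (a A : R) (P m n : nat) (cc tt rr : nat -> R) (bb : nat -> nat -> R) (ob : R).

Fixpoint pieces (k : nat) : list layer :=
  match k with O => nil
  | S k' => pieces k' ++ piece A a (cc k') (cc (S k')) (tt k') (rr k') (bb k') m n end.

Lemma lw_pieces k : lw (pieces k).
Proof. induction k; simpl. constructor. apply lw_app; auto. apply lw_piece. Qed.
Lemma len_pieces k : length (pieces k) = (k * (2 + n * S m))%nat.
Proof. induction k; simpl; auto. rewrite length_app, IHk, len_piece. lia. Qed.

Definition L0 := mkL (fun i => match i with 0 => fadd (fv 0) (fc (-a)) | _ => fc 0 end).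

Definition netw := Network (L0 :: pieces P) (fst (fv 1)) ob.

Lemma netw_depth : depth netw = (1 + P * (2 + n * S m))%nat.
Proof. unfold depth, netw. simpl. rewrite len_pieces. auto. Qed.

Lemma width_lw ls : lw ls -> (fold_right (fun l m => Nat.max (lout l) m) 0 ls <= W)%nat.
Proof. induction 1; simpl. lia. rewrite H. lia. Qed.

Lemma netw_width : (width netw <= 10)%nat.
Proof. unfold width, netw. apply (width_lw (L0 :: pieces P)). constructor; try reflexivity; auto. apply lw_pieces. Qed.

Definition runi (x : R) (i : nat) :=
  run (bb i) (sx x (cc i) (cc (S i)) (tt i) (rr i)) n
     (bb i n - A * sx x (cc i) (cc (S i)) (tt i) (rr i)).

Variables (M dl : R).
Hypotheses (HA : 0 < A) (Hbb : forall i j, (i < P)%nat -> Rabs (bb i j) <= M)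
  (Hrr : forall i, (i < P)%nat -> rr i <> 0) (Hcc : forall i, cc i <= cc (S i))
  (HAM : 2 * M + A/2 + 2 * dl + 1/2 <= A) (Hdl : A^2 / 4^(S m) <= dl) (Hdl0 : 0 <= dl).
Variable x : R.
Hypotheses (Hx : a <= x) (Hsx : forall i, (i < P)%nat -> Rabs (sx x (cc i) (cc (S i)) (tt i) (rr i)) <= 1/2).

Lemma pieces_ok k : (k <= P)%nat -> forall v, v 0%nat = x - a -> v 1%nat = 0 ->
  fst (eval_hidden (pieces k) W v) = W /\
  (snd (eval_hidden (pieces k) W v)) 0%nat = x - a /\ 0 <= (snd (eval_hidden (pieces k) W v)) 1%nat /\
  Rabs ((snd (eval_hidden (pieces k) W v)) 1%nat - INR k * A - fsum k (runi x)) <= INR k * (2 * dl).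
Proof.
  induction k; intros Hk v H0 H1.
  - simpl. rewrite H1. split; auto. split; auto. split; [lra|]. apply Rabs_le. lra.
  - simpl pieces. rewrite eval_app. destruct (IHk ltac:(lia) v H0 H1) as [Hd [E0 [E1 E2]]].
    rewrite Hd.
    set (u := snd (eval_hidden (pieces k) W v)) in *.
    destruct (piece_hoare A x a (cc k) (cc (S k)) (tt k) (rr k) (Hrr k ltac:(lia)) HA Hx
       (bb k) M m n dl (u 1%nat) (fun j => Hbb k j ltac:(lia)) (Hsx k ltac:(lia)) HAM Hdl E1 Hdl0 (Hcc k)
       u (conj E0 eq_refl)) as [[F0 [F1 F2]] Fd].
    split; auto. split; auto. split; auto.
    rewrite S_INR. simpl fsum. fold (runi x k) in F2.
    set (w := snd (eval_hidden _ W u)) in *.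
    apply Rabs_le_between in F2. apply Rabs_le_between in E2. apply Rabs_le. lra.
Qed.

Lemma netw_ok : Rabs (realize netw x - ob - INR P * A - fsum P (runi x)) <= INR P * (2 * dl).
Proof.
  unfold realize, netw. simpl hidden. simpl outW. simpl outb.
  change (eval_hidden (L0 :: pieces P) 1 (fun _ => x)) with
    (eval_hidden (pieces P) W (fun i => relu (fev 1 (match i with 0 => fadd (fv 0) (fc (-a)) | _ => fc 0 end) (fun _ => x)))).
  set (v0 := fun i => relu (fev 1 (match i with 0 => fadd (fv 0) (fc (-a)) | _ => fc 0 end) (fun _ => x))).
  assert (H0 : v0 0%nat = x - a) by (unfold v0; fsimp; apply relu_id; lra).
  assert (H1 : v0 1%nat = 0) by (unfold v0; rewrite fev_fc; apply relu_0; lra).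
  destruct (pieces_ok P (le_n _) v0 H0 H1) as [Hd [E0 [E1 E2]]].
  destruct (eval_hidden (pieces P) W v0) as [d v] eqn:E. simpl in *. subst d.
  rewrite (fsum_unit W 1 v) by (unfold W; lia).
  replace (v 1%nat + ob - ob - INR P * A - fsum P (runi x)) with (v 1%nat - INR P * A - fsum P (runi x)) by ring.
  auto.
Qed.
End Net.


Lemma fsum_sum_n f N : fsum (S N) f = sum_n f N.
Proof. induction N. simpl. rewrite sum_O. ring.
  rewrite sum_Sn. change (fsum (S (S N)) f) with (fsum (S N) f + f (S N)). rewrite IHN. reflexivity. Qed.

Lemma series_lim u l : is_series u l -> is_lim_seq (fun N => fsum (S N) u) l.
Proof. intros H. apply is_lim_seq_ext with (sum_n u). intros; rewrite fsum_sum_n; auto. exact H. Qed.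

Lemma fsum_nonneg N f : (forall k, 0 <= f k) -> 0 <= fsum N f.
Proof. intros H; induction N; simpl; [lra|]. specialize (H N); lra. Qed.

Lemma fsum_mono N f : (forall k, 0 <= f k) -> fsum N f <= fsum (S N) f.
Proof. intros H; simpl. specialize (H N); lra. Qed.

Lemma partial_le_series f : (forall k, 0 <= f k) -> ex_series f -> forall N, fsum N f <= Series f.
Proof.
  intros Hf He N. pose proof (series_lim _ _ (Series_correct _ He)) as HL.
  destruct N. simpl. apply Rle_trans with (fsum 1 f). apply fsum_nonneg; auto.
  apply (is_lim_seq_incr_compare _ _ HL). intros; apply fsum_mono; auto.
  apply (is_lim_seq_incr_compare _ _ HL). intros; apply fsum_mono; auto.
Qed.

Lemma lim_bound (w : nat -> R) (l S B : R) : is_lim_seq w l -> (forall N, Rabs (w N - S) <= B) -> Rabs (l - S) <= B.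
Proof.
  intros Hw HB.
  assert (H1 : is_lim_seq (fun N => Rabs (w N - S)) (Rabs (l - S))).
  { apply (is_lim_seq_abs _ (Finite (l - S))). apply is_lim_seq_minus'; auto. apply is_lim_seq_const. }
  pose proof (is_lim_seq_le _ _ _ _ HB H1 (is_lim_seq_const B)). simpl in H. auto.
Qed.

Lemma pow_half_le n k : (n <= k)%nat -> (/2) ^ k <= (/2) ^ n.
Proof. intros H. replace k with (n + (k - n))%nat by lia. rewrite pow_add.
  pose proof (pow_lt (/2) n ltac:(lra)). assert ((/2) ^ (k - n) <= 1) by (rewrite <- (pow1 (k - n)); apply pow_incr; lra).
  nra. Qed.

Lemma tail_bound (be : nat -> R) (s l Mt : R) n :
  is_series (fun k => be k * s ^ k) l -> Rabs s <= 1/2 -> (forall N, fsum N (fun k => Rabs (be k)) <= Mt) ->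
  Rabs (l - fsum n (fun k => be k * s ^ k)) <= Mt / 2 ^ n.
Proof.
  intros Hs Hs2 HM.
  set (u := fun k => be k * s ^ k).
  assert (Hpow : forall k, (n <= k)%nat -> Rabs (s ^ k) <= / 2 ^ n).
  { intros k Hk. rewrite <- RPow_abs. rewrite <- pow_inv.
    apply Rle_trans with ((/2) ^ k). apply pow_incr. split; [apply Rabs_pos|lra].
    apply pow_half_le; auto. }
  assert (Hstep : forall N, Rabs (fsum (N + n) u - fsum n u) <=
      (fsum (N + n) (fun k => Rabs (be k)) - fsum n (fun k => Rabs (be k))) / 2 ^ n).
  { induction N.
    - simpl. replace (fsum n u - fsum n u) with 0 by ring. rewrite Rabs_R0.
      unfold Rdiv; rewrite Rminus_diag, Rmult_0_l. lra.
    - replace (S N + n)%nat with (S (N + n)) by lia. simpl fsum.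
      replace (fsum (N + n) u + u (N + n)%nat - fsum n u) with ((fsum (N + n) u - fsum n u) + u (N + n)%nat) by ring.
      eapply Rle_trans; [apply Rabs_triang|].
      assert (Rabs (u (N + n)%nat) <= Rabs (be (N + n)%nat) / 2 ^ n).
      { unfold u. rewrite Rabs_mult. unfold Rdiv. apply Rmult_le_compat_l. apply Rabs_pos. apply Hpow. lia. }
      pose proof (pow_lt 2 n ltac:(lra)).
      replace ((fsum (N + n) (fun k : nat => Rabs (be k)) + Rabs (be (N + n)%nat) -
         fsum n (fun k : nat => Rabs (be k))) / 2 ^ n) with
        ((fsum (N + n) (fun k : nat => Rabs (be k)) - fsum n (fun k : nat => Rabs (be k))) / 2 ^ n
          + Rabs (be (N + n)%nat) / 2 ^ n) by (field; lra).
      lra. }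
  apply (lim_bound (fun N => fsum (S (N + n)) u)).
  - pose proof (series_lim _ _ Hs) as HL. apply (is_lim_seq_incr_n _ n) in HL.
    eapply is_lim_seq_ext; [|exact HL]. intros N; simpl. replace (N + n)%nat with (N + n)%nat by lia. reflexivity.
  - intros N. pose proof (Hstep (S N)) as H. simpl plus in H.
    eapply Rle_trans; [exact H|]. unfold Rdiv. apply Rmult_le_compat_r.
    left; apply Rinv_0_lt_compat, pow_lt; lra.
    pose proof (HM (S (N + n))). pose proof (fsum_nonneg n (fun k => Rabs (be k)) (fun k => Rabs_pos _)). simpl in *; lra.
Qed.


Lemma choose_fun {A B : Type} (Pr : A -> B -> Prop) : (forall x, exists y, Pr x y) -> exists g : A -> B, forall x, Pr x (g x).
Proof. intros H. exists (fun x => proj1_sig (constructive_indefinite_description _ (H x))).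
  intros x. exact (proj2_sig (constructive_indefinite_description _ (H x))). Qed.

Definition PieceData (a b : R) (f : R -> R) (P : nat) (cc tt rr : nat -> R) (bb : nat -> nat -> R) (M : R) :=
  (1 <= P)%nat /\ cc 0%nat = a /\ cc P = b /\ (forall i, cc i <= cc (S i)) /\ 0 <= M /\
  (forall i, (i < P)%nat -> 0 < rr i) /\ (forall i j, (i < P)%nat -> Rabs (bb i j) <= M) /\
  (forall i y, (i < P)%nat -> cc i <= y <= cc (S i) ->
     Rabs ((y - tt i) / rr i) <= 1/2 /\
     forall n, Rabs (f y - fsum n (fun k => bb i k * ((y - tt i) / rr i) ^ k)) <= M / 2 ^ n).

Lemma fsum_le_sum N (g : nat -> R) i : (forall k, 0 <= g k) -> (i < N)%nat -> g i <= fsum N g.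
Proof. intros Hg Hi. induction N. lia. simpl. destruct (Nat.eq_dec i N) as [->|].
  pose proof (fsum_nonneg N g Hg); lra. pose proof (Hg N). assert (g i <= fsum N g) by (apply IHN; lia). lra. Qed.

Lemma get_pieces a b f : a <= b -> has_analytic_extension a b f ->
  exists P cc tt rr bb M, PieceData a b f P cc tt rr bb M.
Proof.
  intros Hab [al [be [F [Hal [Hbe [Han HF]]]]]].
  assert (Hex : forall t, exists p : R * (nat -> R), al < t < be ->
      0 < fst p /\ ex_series (fun k => Rabs (snd p k) * fst p ^ k) /\
      forall y, al < y < be -> Rabs (y - t) < fst p -> is_series (fun k => snd p k * (y - t) ^ k) (F y)).
  { intros t. destruct (classic (al < t < be)) as [Ht|Ht].
    - destruct (Han t Ht) as [r [c [Hr [Hs Hy]]]]. exists (r, c). intros _. simpl. auto.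
    - exists (1, fun _ => 0). intros H; tauto. }
  destruct (choose_fun _ Hex) as [g Hg].
  set (rt := fun t => fst (g t)).
  set (dlt := fun t => if Rlt_dec al t then if Rlt_dec t be then Rmin (rt t / 4) (Rmin ((t - al)/2) ((be - t)/2)) else 1 else 1).
  assert (Hdlt : forall t, 0 < dlt t).
  { intros t. unfold dlt. destruct (Rlt_dec al t); [|lra]. destruct (Rlt_dec t be); [|lra].
    destruct (Hg t (conj r r0)) as [Hr _]. unfold rt.
    apply Rmin_pos; [lra|]. apply Rmin_pos; lra. }
  destruct (compactness_value_1d a b (fun t => mkposreal _ (Hdlt t))) as [d Hd]. simpl in Hd.
  destruct (INR_unbounded ((b - a) / d)) as [N HN].
  set (P := S N).
  assert (HP : 0 < INR P) by (unfold P; rewrite S_INR; pose proof (pos_INR N); lra).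
  set (h := (b - a) / INR P).
  assert (Hh0 : 0 <= h) by (unfold h; apply Rmult_le_pos; [lra|left; apply Rinv_0_lt_compat; auto]).
  assert (Hhd : h <= d).
  { unfold h. pose proof (cond_pos d). apply Rmult_le_reg_r with (INR P); auto.
    unfold Rdiv. rewrite Rmult_assoc, Rinv_l by lra. rewrite Rmult_1_r.
    apply Rmult_lt_compat_r with (r := d) in HN; auto. unfold Rdiv in HN.
    rewrite Rmult_assoc, Rinv_l in HN by lra. unfold P; rewrite S_INR. nra. }
  set (cc := fun i : nat => a + INR i * h).
  assert (Hmid : forall i, exists t, (i < P)%nat -> a <= t <= b /\ Rabs (a + (INR i + 1/2) * h - t) < dlt t /\ d <= dlt t).
  { intros i. destruct (Nat.lt_ge_cases i P) as [Hi|Hi].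
    2: exists 0; intros; lia.
    - assert (Hm : a <= a + (INR i + 1/2) * h <= b).
      { split. pose proof (pos_INR i). nra.
        assert (INR i + 1/2 <= INR P) by (assert (INR (S i) <= INR P) by (apply le_INR; lia); rewrite S_INR in *; lra).
        replace b with (a + INR P * h) by (unfold h; field; lra). nra. }
      apply NNPP. intros Hn. apply (Hd _ Hm). intros [t Ht]. apply Hn. exists t. intros _. exact Ht. }
  destruct (choose_fun _ Hmid) as [tt Htt].
  set (rr := fun i => rt (tt i)).
  set (bb := fun i k => snd (g (tt i)) k * rr i ^ k).
  set (Ms := fun i => Series (fun k => Rabs (bb i k))).
  set (M := fsum P (fun i => Rabs (Ms i))).
  assert (Hcc : forall i, cc i <= cc (S i)) by (intros; unfold cc; rewrite S_INR; nra).
  assert (HccP : forall i, (i <= P)%nat -> cc i <= b).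
  { intros i Hi. unfold cc. assert (INR i <= INR P) by (apply le_INR; auto).
    replace b with (a + INR P * h) by (unfold h; field; lra). nra. }
  assert (Hcc0 : forall i, a <= cc i) by (intros; unfold cc; pose proof (pos_INR i); nra).
  assert (Hti : forall i, (i < P)%nat -> al < tt i < be /\ dlt (tt i) <= rt (tt i) / 4 /\ dlt (tt i) <= (tt i - al) / 2 /\ dlt (tt i) <= (be - tt i)/2).
  { intros i Hi. destruct (Htt i Hi) as [Hab' _]. assert (Hin : al < tt i < be) by lra. split; auto.
    assert (E : dlt (tt i) = Rmin (rt (tt i) / 4) (Rmin ((tt i - al)/2) ((be - tt i)/2))).
    { unfold dlt. destruct (Rlt_dec al (tt i)); [|lra]. destruct (Rlt_dec (tt i) be); [reflexivity|lra]. }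
    pose proof (Rmin_l (rt (tt i) / 4) (Rmin ((tt i - al)/2) ((be - tt i)/2))).
    pose proof (Rle_trans _ _ _ (Rmin_r (rt (tt i) / 4) (Rmin ((tt i - al)/2) ((be - tt i)/2))) (Rmin_l _ _)).
    pose proof (Rle_trans _ _ _ (Rmin_r (rt (tt i) / 4) (Rmin ((tt i - al)/2) ((be - tt i)/2))) (Rmin_r _ _)).
    rewrite E. repeat split; lra. }
  assert (Hser : forall i, (i < P)%nat -> 0 < rr i /\ ex_series (fun k => Rabs (bb i k))).
  { intros i Hi. destruct (Hti i Hi) as [Hin _]. destruct (Hg _ Hin) as [Hr [He _]].
    split; auto. eapply ex_series_ext; [|exact He]. intros k. unfold bb. rewrite Rabs_mult, <- RPow_abs.
    unfold rr, rt. rewrite (Rabs_pos_eq (fst (g (tt i)))) by lra. reflexivity. }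
  assert (HMs : forall i NN, (i < P)%nat -> fsum NN (fun k => Rabs (bb i k)) <= M).
  { intros i NN Hi. apply Rle_trans with (Ms i). apply partial_le_series. intros; apply Rabs_pos. apply Hser; auto.
    apply Rle_trans with (Rabs (Ms i)). apply Rle_abs. apply (fsum_le_sum P (fun i => Rabs (Ms i))); auto.
    intros; apply Rabs_pos. }
  exists P, cc, tt, rr, bb, M. split; [unfold P; lia|]. split; [unfold cc; simpl; ring|].
  split; [unfold cc, h; field; lra|]. split; auto. split; [apply fsum_nonneg; intros; apply Rabs_pos|].
  split; [intros i Hi; apply Hser; auto|]. split.
  { intros i j Hi. apply Rle_trans with (fsum (S j) (fun k => Rabs (bb i k))). apply (fsum_le_sum (S j) (fun k => Rabs (bb i k))).
    intros; apply Rabs_pos. lia. apply HMs; auto. }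
  intros i y Hi Hy.
  destruct (Htt i Hi) as [Htab [Hmt Hdd]]. destruct (Hti i Hi) as [Hin [D1 [D2 D3]]].
  destruct (Hser i Hi) as [Hr _].
  destruct (Hg _ Hin) as [_ [_ Hsr]].
  assert (Hym : Rabs (y - (a + (INR i + 1/2) * h)) <= h / 2).
  { apply Rabs_le. unfold cc in Hy. rewrite S_INR in Hy. split; nra. }
  assert (Hyt : Rabs (y - tt i) <= rr i / 2 * (3/4)).
  { replace (y - tt i) with ((y - (a + (INR i + 1/2) * h)) + (a + (INR i + 1/2) * h - tt i)) by ring.
    eapply Rle_trans; [apply Rabs_triang|]. unfold rr. lra. }
  assert (Hyab : al < y < be).
  { apply Rabs_le_between in Hyt. unfold rr in Hyt.
    assert (Rabs (y - tt i) <= 3/2 * dlt (tt i)).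
    { replace (y - tt i) with ((y - (a + (INR i + 1/2) * h)) + (a + (INR i + 1/2) * h - tt i)) by ring.
      eapply Rle_trans; [apply Rabs_triang|]. lra. }
    apply Rabs_le_between in H. lra. }
  assert (Hs : Rabs ((y - tt i) / rr i) <= 1/2).
  { unfold Rdiv. rewrite Rabs_mult, (Rabs_pos_eq (/ rr i)) by (left; apply Rinv_0_lt_compat; auto).
    apply Rmult_le_reg_r with (rr i); auto. rewrite Rmult_assoc, Rinv_l by lra. lra. }
  split; auto. intros n.
  assert (HFy : F y = f y) by (apply HF; split; [apply Rle_trans with (cc i); auto; lra | apply Rle_trans with (cc (S i)); [lra|apply HccP; lia]]).
  rewrite <- HFy. apply tail_bound; auto.
  - eapply is_series_ext; [|apply (Hsr y Hyab)].
    + intros k. unfold bb. rewrite Rmult_assoc, <- Rpow_mult_distr. f_equal. f_equal. unfold rr in *. field. lra.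
    + apply Rle_lt_trans with (1 := Hyt). unfold rr, rt in *. lra.
Qed.


Definition cl (x lo hi : R) := lo + relu (x - lo) - relu (x - hi).

Lemma cl_range x lo hi : lo <= hi -> lo <= cl x lo hi <= hi.
Proof. intros H. unfold cl. destruct (Rle_dec x lo).
  - rewrite (relu_0 (x - lo)), (relu_0 (x - hi)) by lra. lra.
  - destruct (Rle_dec x hi).
    + rewrite (relu_id (x - lo)), (relu_0 (x - hi)) by lra. lra.
    + rewrite (relu_id (x - lo)), (relu_id (x - hi)) by lra. lra. Qed.

Lemma cl_id x lo hi : lo <= x <= hi -> cl x lo hi = x.
Proof. intros H. unfold cl. rewrite (relu_id (x - lo)) by lra.
  destruct (Req_dec x hi). subst; rewrite Rminus_diag, relu_0 by lra; ring.
  rewrite relu_0 by lra. ring. Qed.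

Lemma telescope (g : R -> R) (cc : nat -> R) x : (forall i, cc i <= cc (S i)) ->
  forall k, fsum k (fun i => g (cl x (cc i) (cc (S i))) - g (cc i)) = g (cl x (cc 0%nat) (cc k)) - g (cc 0%nat).
Proof.
  intros Hc. assert (Hm : forall k, cc 0%nat <= cc k) by (induction k; [lra|specialize (Hc k); lra]).
  induction k.
  - simpl. unfold cl. replace (cc 0%nat + relu (x - cc 0%nat) - relu (x - cc 0%nat)) with (cc 0%nat) by ring. ring.
  - simpl fsum. rewrite IHk. unfold cl. specialize (Hc k). specialize (Hm k).
    destruct (Rle_dec x (cc k)).
    + rewrite (relu_0 (x - cc k)), (relu_0 (x - cc (S k))) by lra.
      replace (cc k + 0 - 0) with (cc k) by ring. ring.
    + rewrite (relu_id (x - cc k)) by lra. rewrite (relu_id (x - cc 0%nat)) by lra.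
      replace (cc 0%nat + (x - cc 0%nat) - (x - cc k)) with (cc k) by ring.
      replace (cc k + (x - cc k) - relu (x - cc (S k))) with (cc 0%nat + (x - cc 0%nat) - relu (x - cc (S k))) by ring.
      ring.
Qed.

Lemma pow4_ge n : INR n <= 4 ^ n.
Proof. assert (H : INR n + 1 <= 4 ^ n).
  { induction n. simpl; lra. rewrite S_INR. simpl. pose proof (pos_INR n). lra. }
  lra. Qed.

Lemma half_pow_exp k L : (L < (S k) * (S k))%nat ->
  (/2) ^ k <= 2 * exp (- ln 2 * sqrt (INR L)).
Proof.
  intros HL.
  assert (Hs : sqrt (INR L) <= INR k + 1).
  { rewrite <- (sqrt_square (INR k + 1)) by (pose proof (pos_INR k); lra).
    apply sqrt_le_1_alt. rewrite <- S_INR, <- mult_INR. apply le_INR. lia. }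
  assert (Hl : 0 < ln 2) by (rewrite <- ln_1; apply ln_increasing; lra).
  assert (Hk : (/2) ^ k = exp (- (INR k * ln 2))).
  { rewrite exp_Ropp. change (exp (INR k * ln 2)) with (Rpower 2 (INR k)). rewrite Rpower_pow by lra.
    rewrite pow_inv. reflexivity. }
  rewrite Hk. replace (2 * exp (- ln 2 * sqrt (INR L))) with (exp (ln 2 + - ln 2 * sqrt (INR L))) by (rewrite exp_plus, exp_ln by lra; reflexivity).
  assert (Hle : - (INR k * ln 2) <= ln 2 + - ln 2 * sqrt (INR L)) by nra.
  destruct Hle as [Hlt|Heq]. left; apply exp_increasing; auto. rewrite Heq; lra.
Qed.

Lemma fsum_sub k g h : fsum k (fun i => g i - h i) = fsum k g - fsum k h.
Proof. induction k; simpl; [ring|rewrite IHk; ring]. Qed.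

Lemma fsum_abs_bound k g B : (forall i, (i < k)%nat -> Rabs (g i) <= B) -> Rabs (fsum k g) <= INR k * B.
Proof. induction k; intros H. simpl. rewrite Rabs_R0; lra.
  rewrite S_INR. simpl fsum. eapply Rle_trans; [apply Rabs_triang|].
  assert (Rabs (fsum k g) <= INR k * B) by (apply IHk; intros; apply H; lia).
  assert (Rabs (g k) <= B) by (apply H; lia). lra. Qed.

Theorem mainTheorem6 (a b : R) (f : R -> R) :
  has_analytic_extension a b f ->
  exists C gamma : R, 0 < C /\ 0 < gamma /\
    forall L : nat, exists Phi : network,
      (forall x, a <= x <= b ->
         Rabs (f x - realize Phi x) <= C * exp (- gamma * sqrt (INR L))) /\
      INR (depth Phi) <= C * INR L /\
      INR (width Phi) <= C.
Proof.
  intros H.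
  destruct (Rle_dec a b) as [Hab|Hab].
  2:{ exists 1, 1. split; [lra|split;[lra|]]. intros L. exists (Network nil (fun _ => 0) 0).
      split; [intros x Hx; lra|]. unfold depth, width; simpl. pose proof (pos_INR L). split; lra. }
  destruct (get_pieces a b f Hab H) as [P [cc [tt [rr [bb [M HD]]]]]].
  destruct HD as [HP1 [Hc0 [HcP [Hcc [HM [Hrr [Hbb Hpc]]]]]]].
  set (A := 4 * M + 4).
  assert (HA : 0 < A) by (unfold A; lra).
  destruct (INR_unbounded (A^2)) as [m0 Hm0].
  assert (Hm0' : A^2 <= 4 ^ m0) by (pose proof (pow4_ge m0); lra).
  assert (HPr : 1 <= INR P) by (apply (le_INR 1); auto).
  set (E := INR P * (2 * M + A/2 + 1)).
  assert (HE : 0 <= E) by (unfold E; apply Rmult_le_pos; lra).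
  set (D := (1 + P * (m0 + 4))%nat).
  set (C := 2 * E + INR D + 10 + M * (1 + 2 * INR P) + 1).
  assert (HDpos : 0 <= INR D) by apply pos_INR.
  assert (HC1 : 0 <= M * (1 + 2 * INR P)) by (apply Rmult_le_pos; lra).
  exists C, (ln 2).
  split; [unfold C; lra|]. split; [rewrite <- ln_1; apply ln_increasing; lra|].
  assert (Hfb : forall i y, (i < P)%nat -> cc i <= y <= cc (S i) -> Rabs (f y) <= M).
  { intros i y Hi Hy. destruct (Hpc i y Hi Hy) as [_ Hb]. specialize (Hb 0%nat). simpl in Hb.
    rewrite Rminus_0_r in Hb. lra. }
  assert (Htel : forall x, a <= x <= b -> f x - f a =
      fsum P (fun i => f (cl x (cc i) (cc (S i)))) - fsum P (fun i => f (cc i))).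
  { intros x Hx. rewrite <- fsum_sub. rewrite (telescope f cc x Hcc P). rewrite Hc0, HcP, cl_id; auto. }
  intros L. destruct L as [|L'].
  - exists (Network nil (fun _ => 0) 0). split.
    + intros x Hx. replace (realize (Network nil (fun _ => 0) 0) x) with 0 by (unfold realize; simpl; ring).
      simpl INR. rewrite sqrt_0, Rmult_0_r, exp_0, Rmult_1_r.
      replace (f x - 0) with ((f x - f a) + f a) by ring. rewrite (Htel x Hx).
      assert (H1 : Rabs (fsum P (fun i => f (cl x (cc i) (cc (S i))))) <= INR P * M).
      { apply fsum_abs_bound. intros i Hi. apply (Hfb i); auto. apply cl_range; auto. }
      assert (H2 : Rabs (fsum P (fun i => f (cc i))) <= INR P * M).
      { apply fsum_abs_bound. intros i Hi. apply (Hfb i); auto. split; [lra|apply Hcc]. }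
      assert (H3 : Rabs (f a) <= M).
      { rewrite <- Hc0. apply (Hfb 0%nat); [lia|]. split; [lra|apply Hcc]. }
      eapply Rle_trans; [apply Rabs_triang|]. eapply Rle_trans; [apply Rplus_le_compat_r; unfold Rminus; apply Rabs_triang|].
      rewrite Rabs_Ropp. unfold C. lra.
    + unfold depth, width; simpl. split; [lra|unfold C; lra].
  - set (L := S L').
    destruct (Nat.sqrt_spec L (Nat.le_0_l _)) as [Hk1 Hk2].
    set (k := Nat.sqrt L) in *.
    assert (Hk0 : (1 <= k)%nat) by (destruct k; [unfold L in Hk2; lia|lia]).
    set (m := (k + m0)%nat).
    set (dl := A^2 / 4^(S m)).
    set (ob := f a - fsum P (fun i => f (cc i)) - INR P * A).
    assert (H4 : 0 < 4 ^ k) by (apply pow_lt; lra).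
    assert (H4' : 0 < 4 ^ m0) by (apply pow_lt; lra).
    assert (Hdlv : dl * (4 * 4 ^ k * 4 ^ m0) = A^2).
    { unfold dl, m. replace (4^(S (k+m0))) with (4 * 4^k * 4^m0) by (simpl; rewrite pow_add; ring). field. split; apply Rgt_not_eq, pow_lt; lra. }
    assert (Hdl0 : 0 <= dl) by (unfold dl; apply Rmult_le_pos; [nra|left; apply Rinv_0_lt_compat, pow_lt; lra]).
    assert (Hdl1 : dl * (4 * 4 ^ k) <= 1).
    { assert (dl * (4 * 4 ^ k) * A^2 <= dl * (4 * 4 ^ k) * 4 ^ m0) by (apply Rmult_le_compat_l; [apply Rmult_le_pos; lra|auto]).
      assert (0 < A^2) by nra. nra. }
    assert (H4k : 1 <= 4 ^ k) by (rewrite <- (pow1 k); apply pow_incr; lra).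
    assert (HAM : 2 * M + A/2 + 2 * dl + 1/2 <= A) by (unfold A in *; nra).
    assert (Hhalf : (/2) ^ k * (/2) ^ k = / 4 ^ k).
    { rewrite <- Rpow_mult_distr. replace (/2 * /2) with (/4) by field. apply pow_inv. }
    assert (H2k : 0 < (/2) ^ k) by (apply pow_lt; lra).
    assert (H2k1 : (/2) ^ k <= 1) by (rewrite <- (pow1 k); apply pow_incr; lra).
    assert (Hdl2 : 2 * dl <= (/2) ^ k).
    { assert (dl <= / (4 * 4 ^ k)).
      { apply Rmult_le_reg_r with (4 * 4 ^ k); [lra|]. rewrite Rinv_l by lra. lra. }
      rewrite Rinv_mult in H0. rewrite <- Hhalf in H0. nra. }
    exists (netw a A P m k cc tt rr bb ob). split; [|split].
    + intros x Hx.
      assert (Hsx : forall i, (i < P)%nat -> Rabs (sx x (cc i) (cc (S i)) (tt i) (rr i)) <= 1/2).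
      { intros i Hi. apply (Hpc i); auto. apply cl_range; auto. }
      pose proof (netw_ok a A P m k cc tt rr bb ob M dl HA Hbb
                   (fun i Hi => Rgt_not_eq _ _ (Hrr i Hi)) Hcc HAM (Rle_refl dl) Hdl0 x (proj1 Hx) Hsx) as HN.
      assert (Hpiece : forall i, (i < P)%nat ->
         Rabs (f (cl x (cc i) (cc (S i))) - runi A k cc tt rr bb x i) <= (2 * M + A/2) * (/2) ^ k).
      { intros i Hi. unfold runi. rewrite run_eq.
        change (sx x (cc i) (cc (S i)) (tt i) (rr i)) with ((cl x (cc i) (cc (S i)) - tt i) / rr i).
        set (y := cl x (cc i) (cc (S i))) in *.
        assert (Hy : cc i <= y <= cc (S i)) by (apply cl_range; auto).
        destruct (Hpc i y Hi Hy) as [Hs Hb]. specialize (Hb k).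
        set (s := (y - tt i) / rr i) in *.
        assert (Hsk : Rabs (s ^ k) <= (/2) ^ k) by (rewrite <- RPow_abs; apply pow_incr; split; [apply Rabs_pos|lra]).
        assert (Hbk : Rabs (bb i k - A * s) <= M + A/2).
        { eapply Rle_trans; [unfold Rminus; apply Rabs_triang|]. rewrite Rabs_Ropp, Rabs_mult, (Rabs_pos_eq A) by lra.
          specialize (Hbb i k Hi). assert (A * Rabs s <= A * (1/2)) by (apply Rmult_le_compat_l; lra). lra. }
        replace (f y - (fsum k (fun j => bb i j * s ^ j) + s ^ k * (bb i k - A * s)))
          with ((f y - fsum k (fun j => bb i j * s ^ j)) - s ^ k * (bb i k - A * s)) by ring.
        eapply Rle_trans; [unfold Rminus at 1; apply Rabs_triang|]. rewrite Rabs_Ropp, Rabs_mult.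
        assert (Rabs (s ^ k) * Rabs (bb i k - A * s) <= (/2) ^ k * (M + A/2)) by
          (apply Rmult_le_compat; auto; apply Rabs_pos).
        unfold Rdiv in Hb. rewrite <- pow_inv in Hb. lra. }
      assert (Hsum : Rabs (fsum P (fun i => f (cl x (cc i) (cc (S i))) - runi A k cc tt rr bb x i))
                      <= INR P * ((2 * M + A/2) * (/2) ^ k)) by (apply fsum_abs_bound; auto).
      rewrite fsum_sub in Hsum.
      replace (f x - realize (netw a A P m k cc tt rr bb ob) x) with
        ((fsum P (fun i => f (cl x (cc i) (cc (S i)))) - fsum P (runi A k cc tt rr bb x))
         - (realize (netw a A P m k cc tt rr bb ob) x - ob - INR P * A - fsum P (runi A k cc tt rr bb x))).
      2:{ unfold ob. pose proof (Htel x Hx). lra. }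
      eapply Rle_trans; [unfold Rminus at 1; apply Rabs_triang|]. rewrite Rabs_Ropp.
      assert (HE2 : E * (/2) ^ k <= 2 * E * exp (- ln 2 * sqrt (INR L))).
      { pose proof (half_pow_exp k L Hk2). replace (2 * E * exp (- ln 2 * sqrt (INR L))) with (E * (2 * exp (- ln 2 * sqrt (INR L)))) by ring. apply Rmult_le_compat_l; auto. }
      assert (HC : 2 * E * exp (- ln 2 * sqrt (INR L)) <= C * exp (- ln 2 * sqrt (INR L))).
      { apply Rmult_le_compat_r. left; apply exp_pos. unfold C; lra. }
      assert (INR P * (2 * dl) <= INR P * (/2) ^ k) by (apply Rmult_le_compat_l; lra).
      unfold E in HE2, HC. lra.
    + rewrite netw_depth. apply Rle_trans with (INR D * INR L).
      * rewrite <- mult_INR. apply le_INR. unfold D, m. nia.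
      * apply Rmult_le_compat_r; [apply pos_INR|unfold C; lra].
    + pose proof (netw_width a A P m k cc tt rr bb ob). apply le_INR in H0. simpl in H0. unfold C. lra.
Qed.
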